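(* Let $\Psi_n$ be a discrete-time Markov chain on a measurable space $(X,\mathcal{B})$, let $X=G\cup B$ be a partition into measurable sets, and let $\mathfrak{C}\in\mathcal{B}$ with $\mathfrak{C}\subset G$. Let $T_0=0$ and $T_{n+1}=\inf\{k>T_n:\Psi_k\in G\}$, let $\hat\Psi_n=\Psi_{T_n}$ (the $G$-induced chain), $\tau_{\mathfrak{C}}=\inf\{n>0:\Psi_n\in\mathfrak{C}\}$ and $\hat\tau_{\mathfrak{C}}=\inf\{n>0:\hat\Psi_n\in\mathfrak{C}\}$. Assume: (i) there is a constant $\alpha>0$ and a function $\xi:X\to[1,\infty)$ with $\sup_{x\in G}\xi(x)\le\xi_1<\infty$ such that for every $n$ and $k$, $\mathbb{P}[T_{n+1}-T_n>k\mid\Psi_{T_n}]\le\xi(\Psi_{T_n})k^{-\alpha}$; (ii) there are a constant $\omega>0$ and a function $\eta:X\to(0,\infty)$ such that $\mathbb{P}_{\Psi_0}[\hat\tau_{\mathfrak{C}}>k]\le\eta(\Psi_0)e^{-\omega k}$ for all $k$. Then for any $\epsilon>0$ there is a constant $c$ such that $$\mathbb{P}_{\Psi_0}[\tau_{\mathfrak{C}}>n]\le c\,(\eta(\Psi_0)+\xi(\Psi_0))\,n^{-(\alpha-\epsilon)}$$ for every $\Psi_0\in X$ and all $n\ge1$.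
   Context: $\mathbb{P}_{x}$ denotes probability for the chain started at $\Psi_0=x$. *)

(* Defs.v *)
From HB Require Import structures.
From mathcomp Require Import all_boot all_order all_algebra.
From mathcomp Require Import all_classical all_reals all_analysis.
Set Implicit Arguments. Unset Strict Implicit. Unset Printing Implicit Defensive.
Import Order.TTheory GRing.Theory Num.Theory.
Local Open Scope classical_set_scope.
Local Open Scope ring_scope.

(* First time strictly after t at which the (Prop) predicate P holds;
   None encodes inf of the empty set = +infinity. *)
Definition first_after (P : nat -> Prop) (t : nat) : option nat :=
  match pselect (exists k, (t < k)%N && `[< P k >]) with
  | left h => Some (ex_minn h)
  | right _ => None
  end.

Definition opt_gt (o : option nat) (n : nat) : Prop :=
  if o is Some t then (n < t)%N else True.

Section chain.
Context {d d' : measure_display} (X : measurableType d) (Om : measurableType d').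
Context (R : realType).

Definition cyl (Psi : nat -> Om -> X) (n : nat) (A : nat -> set X) : set Om :=
  [set w | forall i, (i <= n)%N -> A i (Psi i w)].

(* Psi is, under each P x, a Markov chain with transition kernel K started at x
   (P_x = law of the chain started at Psi_0 = x). The Markov property is stated
   with respect to the natural filtration, generated by the cylinder events. *)
Definition markov_family (P : X -> probability Om R) (Psi : nat -> Om -> X)
    (K : R.-pker X ~> X) : Prop :=
  [/\ (forall n, measurable_fun setT (Psi n)),
      (forall x A, measurable A -> P x (Psi 0%N @^-1` A) = (\1_A x)%:E)
    & (forall x n (A : nat -> set X) B, (forall i, measurable (A i)) ->
         measurable B ->
         P x (cyl Psi n A `&` Psi n.+1 @^-1` B) =
         (\int[P x]_(w in cyl Psi n A) K (Psi n w) B)%E)].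

Fixpoint visit_time (G : set X) (Psi : nat -> Om -> X) (n : nat) (w : Om)
    : option nat :=
  match n with
  | O => Some 0%N
  | S m => match visit_time G Psi m w with
           | Some t => first_after (fun k => G (Psi k w)) t
           | None => None
           end
  end.

(* Psi_{T_n}, the G-induced chain (default value Psi_0 when T_n = oo,
   only ever used on {T_n < oo}). *)
Definition induced_chain (G : set X) (Psi : nat -> Om -> X) (n : nat) (w : Om) : X :=
  if visit_time G Psi n w is Some t then Psi t w else Psi 0%N w.

Definition hit_time (C : set X) (Psi : nat -> Om -> X) (w : Om) : option nat :=
  first_after (fun m => C (Psi m w)) 0%N.

Definition induced_hit_time (G C : set X) (Psi : nat -> Om -> X) (w : Om)
    : option nat :=
  first_after (fun m => exists t, visit_time G Psi m w = Some t /\ C (Psi t w)) 0%N.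

Definition gap_gt (G : set X) (Psi : nat -> Om -> X) (n k : nat) : set Om :=
  [set w | exists t, visit_time G Psi n w = Some t /\
           opt_gt (visit_time G Psi n.+1 w) (t + k)%N].

Definition induced_in (G : set X) (Psi : nat -> Om -> X) (n : nat) (A : set X)
    : set Om :=
  [set w | exists t, visit_time G Psi n w = Some t /\ A (Psi t w)].

End chain.

(* Main.v *)
Require Import Defs.
From HB Require Import structures.
From mathcomp Require Import all_boot all_order all_algebra.
From mathcomp Require Import all_classical all_reals all_analysis.
From mathcomp Require Import ring lra measurable_realfun.
Import Order.TTheory GRing.Theory Num.Theory.
Local Open Scope classical_set_scope.
Local Open Scope ring_scope.
Set Implicit Arguments. Unset Strict Implicit. Unset Printing Implicit Defensive.

Lemma first_afterP (P : nat -> Prop) t u :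
  first_after P t = Some u <->
  [/\ (t < u)%N, P u & forall m, (t < m < u)%N -> ~ P m].
Proof.
rewrite /first_after; case: pselect => [h|h].
  case: ex_minnP => m /andP[tm /asboolP Pm] hmin; split.
    case=> <-; split => // m' /andP[tm' m'u] Pm'.
    have := hmin m'; rewrite tm' /=.
    have -> : `[< P m' >] = true by apply/asboolP.
    by move=> /(_ isT); rewrite leqNgt m'u.
  case=> tu Pu hno; congr Some; apply/eqP; rewrite eqn_leq.
  have -> /= : (m <= u)%N.
    by apply: hmin; rewrite tu /=; apply/asboolP.
  rewrite leqNgt; apply/negP => mu; apply: (hno m) => //.
  by rewrite tm mu.
split => // -[tu Pu _]; exfalso; apply: h; exists u; rewrite tu /=.
exact/asboolP.
Qed.

Lemma first_after_None (P : nat -> Prop) t :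
  first_after P t = None -> forall m, (t < m)%N -> ~ P m.
Proof.
rewrite /first_after; case: pselect => // h _ m tm Pm; apply: h.
by exists m; rewrite tm /=; apply/asboolP.
Qed.

Lemma opt_gt_first_after (P : nat -> Prop) t k :
  opt_gt (first_after P t) k <-> forall m, (t < m <= k)%N -> ~ P m.
Proof.
case E: (first_after P t) => [u|] /=.
  move/first_afterP: E => [tu Pu hno]; split.
    move=> ku m /andP[tm mk]; apply: hno; rewrite tm /=.
    exact: leq_ltn_trans mk ku.
  move=> H; rewrite ltnNge; apply/negP => uk; apply: (H u) => //.
  by rewrite tu.
split => // _ m /andP[tm _]; exact: first_after_None E m tm.
Qed.

Section meas.
Context {d d' : measure_display} (X : measurableType d) (Om : measurableType d').
Variables (Psi : nat -> Om -> X) (G : set X).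
Hypothesis mPsi : forall n, measurable_fun setT (Psi n).
Hypothesis mG : measurable G.

Lemma mpre n A : measurable A -> measurable (Psi n @^-1` A).
Proof. by move=> mA; have := mPsi n measurableT mA; rewrite setTI. Qed.

Lemma mconst (Q : Prop) : measurable [set _ : Om | Q].
Proof.
case: (pselect Q) => q.
  rewrite (_ : [set _ | Q] = setT) //; apply/seteqP; split => w //=.
rewrite (_ : [set _ | Q] = set0) //; apply/seteqP; split => w //=.
Qed.

Lemma mvisit j t : measurable [set w | visit_time G Psi j w = Some t].
Proof.
elim: j t => [|j IH] t; first exact: (mconst (Some 0%N = Some t)).
rewrite (_ : [set w | _] = \bigcup_s ([set w | visit_time G Psi j w = Some s] `&`
  ([set _ | (s < t)%N] `&` (Psi t @^-1` G `&`
   \bigcap_m ([set _ | ~ (s < m < t)%N] `|` ~` (Psi m @^-1` G)))))).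
  apply: bigcupT_measurable => s; apply: measurableI; first exact: IH.
  apply: measurableI; first exact: mconst.
  apply: measurableI; first exact: mpre.
  apply: bigcapT_measurable => m; apply: measurableU; first exact: mconst.
  by apply: measurableC; exact: mpre.
apply/seteqP; split => w /=.
  case E: (visit_time G Psi j w) => [s|] //= /first_afterP [st Gt hno].
  exists s => //; split => //; split => //; split => // m _.
  case: (pselect ((s < m < t)%N)) => h; [right; exact: hno | by left].
move=> [s _ [vs [st [Gt hno]]]]; rewrite vs; apply/first_afterP; split => //.
by move=> m hm Gm; case: (hno m I).
Qed.

Lemma mnone j : measurable [set w | visit_time G Psi j w = None].
Proof.
rewrite (_ : [set w | _] = ~` \bigcup_t [set w | visit_time G Psi j w = Some t]).
  by apply: measurableC; apply: bigcupT_measurable => t; exact: mvisit.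
apply/seteqP; split => w /=.
  by move=> E [t _]; rewrite /= E.
case E: (visit_time G Psi j w) => [t|] // H; exfalso; apply: H; by exists t.
Qed.

Lemma minduced j A : measurable A -> measurable (induced_in G Psi j A).
Proof.
move=> mA.
rewrite (_ : induced_in _ _ _ _ = \bigcup_t ([set w | visit_time G Psi j w = Some t]
   `&` Psi t @^-1` A)).
  apply: bigcupT_measurable => t; apply: measurableI; first exact: mvisit.
  exact: mpre.
apply/seteqP; split => w /=.
  by move=> [t [vt At]]; exists t.
by move=> [t _ [vt At]]; exists t.
Qed.

Lemma mgap j k : measurable (gap_gt G Psi j k).
Proof.
rewrite (_ : gap_gt _ _ _ _ = \bigcup_t ([set w | visit_time G Psi j w = Some t]
   `&` ([set w | visit_time G Psi j.+1 w = None] `|`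
        \bigcup_u ([set w | visit_time G Psi j.+1 w = Some u] `&`
                   [set _ | (t + k < u)%N])))).
  apply: bigcupT_measurable => t; apply: measurableI; first exact: mvisit.
  apply: measurableU; first exact: mnone.
  apply: bigcupT_measurable => u; apply: measurableI; first exact: mvisit.
  exact: mconst.
apply/seteqP; split => w.
  move=> [t [vt ht]]; exists t; first done; split; first done.
  case E: (visit_time G Psi j.+1 w) ht => [u|] h; last by left.
  by right; exists u.
move=> [t _ [vt hh]]; exists t; split; first done.
case: hh => [h|[u _ [h1 h2]]].
  by rewrite h.
by rewrite h1.
Qed.

Lemma mchain j : measurable_fun setT (induced_chain G Psi j).
Proof.
move=> _ A mA; rewrite setTI.
rewrite (_ : _ @^-1` _ = \bigcup_t ([set w | visit_time G Psi j w = Some t]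
   `&` Psi t @^-1` A) `|` ([set w | visit_time G Psi j w = None] `&` Psi 0%N @^-1` A)).
  apply: measurableU.
    apply: bigcupT_measurable => t; apply: measurableI; first exact: mvisit.
    exact: mpre.
  by apply: measurableI; [exact: mnone | exact: mpre].
apply/seteqP; split => w /=; rewrite /induced_chain.
  case E: (visit_time G Psi j w) => [t|] h; first by left; exists t.
  by right.
by move=> [[t _ [vt At]]|[vn At]]; rewrite ?vt ?vn.
Qed.

Lemma mhit C n : measurable C ->
  measurable [set w | opt_gt (hit_time C Psi w) n].
Proof.
move=> mC.
rewrite (_ : [set w | _] = \bigcap_m ([set _ | ~ (0 < m <= n)%N] `|` ~` (Psi m @^-1` C))).
  apply: bigcapT_measurable => m; apply: measurableU; first exact: mconst.
  by apply: measurableC; exact: mpre.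
apply/seteqP; split => w /=; rewrite /hit_time opt_gt_first_after.
  move=> H m _; case: (pselect ((0 < m <= n)%N)) => h; [right; exact: H | by left].
by move=> H m hm Cm; case: (H m I).
Qed.

Lemma mihit C n : measurable C ->
  measurable [set w | opt_gt (induced_hit_time G C Psi w) n].
Proof.
move=> mC.
rewrite (_ : [set w | _] = \bigcap_m ([set _ | ~ (0 < m <= n)%N] `|` ~` (induced_in G Psi m C))).
  apply: bigcapT_measurable => m; apply: measurableU; first exact: mconst.
  by apply: measurableC; exact: minduced.
apply/seteqP; split => w /=; rewrite /induced_hit_time opt_gt_first_after.
  move=> H m _; case: (pselect ((0 < m <= n)%N)) => h; [right; exact: H | by left].
by move=> H m hm Cm; case: (H m I).
Qed.

End meas.

Section comb.
Context {d d' : measure_display} (X : measurableType d) (Om : measurableType d').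
Variables (Psi : nat -> Om -> X) (G : set X).

Lemma visit_pos j w t : visit_time G Psi j.+1 w = Some t ->
  (0 < t)%N /\ G (Psi t w).
Proof.
rewrite /=; case: (visit_time G Psi j w) => [s|] // /first_afterP [st Gt _].
by split => //; apply: leq_ltn_trans st.
Qed.

Lemma no_gap k m0 w : (forall j, (j < m0)%N -> ~ gap_gt G Psi j k w) ->
  forall j, (j <= m0)%N -> exists t, visit_time G Psi j w = Some t /\ (t <= j * k)%N.
Proof.
move=> H; elim => [|j IH] hj; first by exists 0%N.
have [t [vt tle]] := IH (ltnW hj).
have ng := H j hj.
case E: (visit_time G Psi j.+1 w) => [u|].
  exists u; split => //; rewrite mulSn.
  have : (u <= t + k)%N.
    rewrite leqNgt; apply/negP => h; apply: ng; exists t; split => //.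
    by rewrite E.
  move=> h; apply: (leq_trans h); rewrite addnC leq_add2l //.
by exfalso; apply: ng; exists t; split => //; rewrite E.
Qed.

Lemma cover C n m0 k w : (m0 * k <= n)%N ->
  opt_gt (hit_time C Psi w) n ->
  opt_gt (induced_hit_time G C Psi w) m0 \/
  exists j, (j < m0)%N /\ gap_gt G Psi j k w.
Proof.
move=> hmk hit.
case: (pselect (exists j, (j < m0)%N /\ gap_gt G Psi j k w)) => hg; first by right.
left.
have nog : forall j, (j < m0)%N -> ~ gap_gt G Psi j k w.
  by move=> j hj gj; apply: hg; exists j.
rewrite /induced_hit_time opt_gt_first_after => m /andP[m0' mm] [t [vt Ct]].
have [t' [vt' tle]] := no_gap nog mm.
move: vt'; rewrite vt => -[et]; rewrite -et in tle.
case: m m0' mm vt tle => // m _ mm vt tle.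
have [t0 _] := visit_pos vt.
move: hit; rewrite /hit_time opt_gt_first_after => /(_ t); apply => //.
rewrite t0 /=; apply: (leq_trans tle); apply: (leq_trans _ hmk).
by rewrite leq_mul2r mm orbT.
Qed.

End comb.
Lemma expR_powR_le (R : realType) (y r : R) : 0 < y -> 0 < r ->
  expR (- y) * y `^ r <= r `^ r.
Proof.
move=> y0 r0.
set z := y / r.
have z0 : 0 < z by apply: divr_gt0.
have hz : z <= expR z by have := expR_ge1Dx z; lra.
have h1 : z `^ r <= expR y.
  have -> : y = z * r by rewrite /z mulfVK ?gt_eqF.
  rewrite expRM; apply: ge0_ler_powR => //; rewrite ?nnegrE;
   [exact: ltW | exact: ltW | exact: expR_ge0].
have ey : y = r * z by rewrite /z mulrC mulfVK ?gt_eqF.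
rewrite [in X in _ * X]ey powRM; [|exact: ltW|exact: ltW]; rewrite mulrCA.
rewrite -[leRHS]mulr1; apply: ler_wpM2l; first exact: powR_ge0.
rewrite expRN -(ler_pM2l (expR_gt0 y)) mulr1 mulrA mulfV ?gt_eqF ?expR_gt0 // mul1r.
exact: h1.
Qed.

Lemma analytic (R : realType) (alpha omega beta : R) :
  0 < alpha -> 0 < omega -> beta < alpha ->
  exists c0 : R, 0 <= c0 /\ forall n : nat, (1 <= n)%N ->
    exists m0 k : nat, (0 < k)%N /\ (m0 * k <= n)%N /\
      expR (- omega * m0%:R) <= c0 * n%:R `^ (- beta) /\
      m0%:R * k%:R `^ (- alpha) <= c0 * n%:R `^ (- beta).
Proof.
move=> a0 w0 ba.
have [b0|b0] := leP beta 0.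
  exists 1; split => // n n1; exists 1%N, 1%N; split => //; split => //.
  have hN : 1 <= (n%:R : R) by rewrite ler1n.
  have h1 : 1 <= (n%:R : R) `^ (- beta).
    have h := @ler_powR R _ hN 0 (- beta); rewrite powRr0 in h; apply: h; lra.
  rewrite mul1r; split.
    apply: le_trans h1; rewrite expR_le1 mulr1; lra.
  by rewrite powR1 mul1r.
set delta := (alpha - beta) / (1 + alpha).
set gamma := 1 - delta.
set r := beta / delta.
have d0 : 0 < delta by apply: divr_gt0; lra.
have d1 : delta < 1 by rewrite /delta ltr_pdivrMr; lra.
have g0 : 0 < gamma by rewrite /gamma; lra.
have r0 : 0 < r by apply: divr_gt0.
set c1 := expR omega * r `^ r / omega `^ r.
set c2 := (2 : R) `^ (1 + alpha).
have c10 : 0 <= c1.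
  by rewrite /c1 mulr_ge0 ?invr_ge0 ?powR_ge0 // mulr_ge0 ?powR_ge0 ?expR_ge0.
have c20 : 0 <= c2 by exact: powR_ge0.
exists (c1 + c2); split; first lra.
move=> n n1.
set N : R := n%:R.
have hN : 1 <= N by rewrite /N ler1n.
have N0 : 0 < N by lra.
set Ng := N `^ gamma.
have hNg : 1 <= Ng.
  have h := @ler_powR R _ hN 0 gamma; rewrite powRr0 in h; apply: h; lra.
set k := Num.truncn Ng.
have hk : (0 < k)%N by rewrite /k truncn_gt0.
have hkR : 1 <= (k%:R : R) by rewrite ler1n.
have hkle : (k%:R : R) <= Ng by rewrite /k truncn_le; lra.
have hk2 : Ng <= 2 * k%:R.
  have := truncnS_gt Ng; rewrite -/k -addn1 natrD; lra.
set m0 := (n %/ k)%N.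
exists m0, k; split => //; split; first exact: leq_divM.
have hNb : 0 < N `^ beta by apply: powR_gt0.
have hm : N < (m0.+1)%:R * k%:R by rewrite -natrM ltr_nat /N ltn_ceil.
have hmk : (m0%:R : R) * k%:R <= N by rewrite -natrM ler_nat leq_divM.
have eN : N = N `^ delta * Ng.
  rewrite /Ng -powRD; last by apply/implyP => _; rewrite gt_eqF.
  by rewrite /gamma addrC subrK powRr1 // ltW.
have hNd : N `^ delta < (m0.+1)%:R.
  have Ng0 : 0 < Ng by lra.
  rewrite -(ltr_pM2r Ng0) -eN. apply: (lt_le_trans hm).
  by rewrite ler_wpM2l.
rewrite powRN; split.
- have hNi : 0 <= (N `^ beta)^-1 by rewrite invr_ge0 powR_ge0.
  apply: (@le_trans _ _ (c1 * (N `^ beta)^-1)); last first.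
    by apply: ler_wpM2r => //; lra.
  rewrite ler_pdivlMr //.
  have eb : N `^ beta = (N `^ delta) `^ r.
    by rewrite -powRrM /r mulrC divfK ?gt_eqF.
  set M : R := (m0.+1)%:R.
  have M0 : 0 < M by rewrite /M ltr0n.
  apply: (@le_trans _ _ (expR (- omega * m0%:R) * M `^ r)).
    rewrite eb; apply: ler_wpM2l; first exact: expR_ge0.
    by apply: ge0_ler_powR; rewrite ?nnegrE ?powR_ge0 //; exact: ltW.
  have eM : M = m0%:R + 1 by rewrite /M -addn1 natrD.
  have ee : expR (- omega * m0%:R) = expR omega * expR (- (omega * M)).
    by rewrite -expRD eM; congr expR; ring.
  have := @expR_powR_le R (omega * M) r (mulr_gt0 w0 M0) r0.
  rewrite powRM; [move=> h | exact: ltW | exact: ltW].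
  have wr : 0 < omega `^ r by apply: powR_gt0.
  rewrite ee /c1 -!mulrA; apply: ler_wpM2l; first exact: expR_ge0.
  rewrite ler_pdivlMr //.
  by rewrite -mulrA (mulrC (M `^ r)).
- have kR0 : 0 < (k%:R : R) by lra.
  have kA : 0 < (k%:R : R) `^ alpha by apply: powR_gt0.
  rewrite powRN.
  apply: (@le_trans _ _ (c2 / N `^ beta)); last first.
    by apply: ler_wpM2r; [rewrite invr_ge0 powR_ge0 | lra].
  rewrite ler_pdivlMr // mulrAC ler_pdivrMr //.
  rewrite -(ler_pM2r kR0) mulrAC.
  apply: (@le_trans _ _ (N * N `^ beta)).
    by apply: ler_wpM2r => //; exact: ltW.
  have e1 : N * N `^ beta = N `^ (1 + beta).
    rewrite powRD; last by apply/implyP => _; rewrite gt_eqF.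
    by rewrite powRr1 // ltW.
  have e2 : c2 * k%:R `^ alpha * k%:R = (2 * k%:R) `^ (1 + alpha).
    rewrite powRM ?ler0n // /c2 -mulrA; congr (_ * _).
    rewrite powRD; last by apply/implyP => _; rewrite gt_eqF.
    by rewrite powRr1 ?ler0n // mulrC.
  rewrite e1 e2.
  have e3 : 1 + beta = gamma * (1 + alpha) by rewrite /gamma /delta; field; lra.
  rewrite e3 powRrM.
  apply: ge0_ler_powR; rewrite ?nnegrE ?powR_ge0 //; lra.
Qed.

Lemma int_bound {d' : measure_display} (Om : measurableType d') (R : realType)
  (mu : probability Om R) (D : set Om) (f : Om -> R) (M : R) :
  measurable D -> measurable_fun setT f -> 0 <= M ->
  (forall w, D w -> 0 <= f w <= M) ->
  (\int[mu]_(w in D) (f w)%:E <= M%:E)%E.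
Proof.
move=> mD mf M0 hf.
have h : (\int[mu]_(w in D) (f w)%:E <= \int[mu]_(w in D) (cst M%:E) w)%E.
  apply: ge0_le_integral => //.
  - by move=> w /hf /andP[]; rewrite lee_fin.
  - exact/measurable_EFinP/measurable_funTS.
  - by move=> w /hf /andP[_]; rewrite lee_fin.
apply: le_trans h _.
rewrite integral_cst // -[leRHS]mule1; apply: lee_wpmul2l; first by rewrite lee_fin.
exact: probability_le1.
Qed.

Unset Implicit Arguments. Set Strict Implicit.

Theorem theorem3p6 (d d' : measure_display) (X : measurableType d)
  (Om : measurableType d') (R : realType)
  (P : X -> probability Om R) (Psi : nat -> Om -> X) (K : R.-pker X ~> X)
  (G B C : set X) (alpha omega : R) (xi eta : X -> R) :
  markov_family P Psi K ->
  measurable G -> measurable B -> G `&` B = set0 -> G `|` B = setT ->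
  measurable C -> C `<=` G ->
  (* (i) *)
  0 < alpha ->
  measurable_fun setT xi ->
  (forall x, 1 <= xi x) ->
  (exists xi1 : R, forall x, G x -> xi x <= xi1) ->
  (forall x n k A, (0 < k)%N -> measurable A ->
     (P x (gap_gt G Psi n k `&` induced_in G Psi n A) <=
      \int[P x]_(w in induced_in G Psi n A)
         (xi (induced_chain G Psi n w) * k%:R `^ (- alpha))%:E)%E) ->
  (* (ii) *)
  0 < omega ->
  (forall x, 0 < eta x) ->
  (forall x k, (P x [set w | opt_gt (induced_hit_time G C Psi w) k] <=
                (eta x * expR (- omega * k%:R))%:E)%E) ->
  forall eps : R, 0 < eps ->
  exists c : R, forall x (n : nat), (1 <= n)%N ->
    (P x [set w | opt_gt (hit_time C Psi w) n] <=
     (c * (eta x + xi x) * n%:R `^ (- (alpha - eps)))%:E)%E.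
Proof.
move=> [mPsi hP0 _] mG mB GB GBT mC CG a0 mxi xi1h [xi1 hxi1] hgap w0 eta0 hihit
  eps eps0.
have [c0 [c00 hc0]] := @analytic R alpha omega (alpha - eps) a0 w0
  (ltac:(lra)).
set xp := 1 + `|xi1|.
have xp1 : 1 <= xp by rewrite /xp lerDl.
have hxi : forall y, G y -> xi y <= xp.
  move=> y Gy; apply: (le_trans (hxi1 y Gy)); rewrite /xp.
  have := ler_norm xi1; lra.
exists (c0 * (1 + xp)) => x n n1.
have [m0 [k [k0 [hmk [he hg]]]]] := hc0 n n1.
set kk := k%:R `^ (- alpha).
have kk0 : 0 <= kk by exact: powR_ge0.
have xi0 : forall y, 0 <= xi y by move=> y; have := xi1h y; lra.
have gen : forall j A M, measurable A -> 0 <= M ->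
    (forall w, induced_in G Psi j A w -> xi (induced_chain G Psi j w) <= M) ->
    (P x (gap_gt G Psi j k `&` induced_in G Psi j A) <= (M * kk)%:E)%E.
  move=> j A M mA M0 hM; apply: (le_trans (hgap x j k A k0 mA)).
  apply: int_bound.
  - exact: minduced.
  - apply: measurable_funM; last exact: measurable_cst.
    exact: measurableT_comp mxi (mchain mPsi mG j).
  - exact: mulr_ge0.
  - move=> w hw; rewrite mulr_ge0 ?xi0 //=.
    by apply: ler_wpM2r => //; exact: hM.
have gapb : forall j, (P x (gap_gt G Psi j k) <= (xp * xi x * kk)%:E)%E.
  case => [|j].
  - set A0 := [set y | xi y <= xi x].
    have mA0 : measurable A0.
      rewrite (_ : A0 = xi @^-1` `]-oo, xi x]).
        by have := mxi measurableT _ (measurable_itv `]-oo, xi x]); rewrite setTI.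
      by apply/seteqP; split => y; rewrite /A0 /= in_itv.
    set I0 := induced_in G Psi 0 A0.
    have mI0 : measurable I0 by exact: minduced.
    have hI0 : I0 = Psi 0%N @^-1` A0.
      apply/seteqP; split => w.
        by move=> [t [[<-] At]].
      by move=> hw; exists 0%N.
    have Ax : A0 x by rewrite /A0 /=.
    have PI0 : P x I0 = 1%E by rewrite hI0 hP0 // indicE (mem_set Ax).
    have PC : P x (~` I0) = 0%E.
      by rewrite probability_setC // PI0 subee.
    apply: (@le_trans _ _ (P x ((gap_gt G Psi 0 k `&` I0) `|` ~` I0))).
      apply: le_measure; rewrite ?inE.
      + exact: mgap.
      + apply: measurableU; last exact: measurableC.
        by apply: measurableI => //; exact: mgap.
      + move=> w gw; case: (pselect (I0 w)) => h; [by left; split | by right].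
    have mgI : measurable (gap_gt G Psi 0 k `&` I0).
      by apply: measurableI => //; exact: mgap.
    apply: (le_trans (measureU2 (P x) mgI (measurableC mI0))).
    rewrite [X in (_ + X <= _)%E](_ : _ = 0%E); last exact: PC.
    rewrite adde0.
    apply: (le_trans (gen 0%N A0 (xi x) mA0 (xi0 x) _)).
      by move=> w [t [[<-] At]]; rewrite /induced_chain /=.
    rewrite lee_fin; apply: ler_wpM2r => //; exact: ler_peMl.
  - have -> : gap_gt G Psi j.+1 k = gap_gt G Psi j.+1 k `&` induced_in G Psi j.+1 setT.
      apply/seteqP; split => w; last by case.
      by move=> hw; split => //; case: hw => t [vt _]; exists t.
    apply: (le_trans (gen j.+1 setT xp measurableT _ _)).
    + lra.
    + move=> w [t [vt _]]; rewrite /induced_chain vt; apply: hxi.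
      by have [] := visit_pos vt.
    rewrite lee_fin; apply: ler_wpM2r => //; rewrite -[leLHS]mulr1.
    by apply: ler_wpM2l; [lra | exact: xi1h].
set U := fun m => [set w | exists j, (j < m)%N /\ gap_gt G Psi j k w].
have mU : forall m, measurable (U m).
  move=> m; rewrite (_ : U m = \bigcup_j ([set _ | (j < m)%N] `&` gap_gt G Psi j k)).
    apply: bigcupT_measurable => j; apply: measurableI; first exact: mconst.
    exact: mgap.
  apply/seteqP; split => w; first by move=> [j [jm gj]]; exists j.
  by move=> [j _ [jm gj]]; exists j.
have PU : forall m, (P x (U m) <= (m%:R * (xp * xi x * kk))%:E)%E.
  elim => [|m IH].
    rewrite (_ : U 0%N = set0) ?measure0 ?mul0r //.
    by apply/seteqP; split => w // [j []].
  rewrite (_ : U m.+1 = U m `|` gap_gt G Psi m k).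
    apply: (le_trans (measureU2 (P x) (mU m) (mgap mPsi mG m k))).
    rewrite -addn1 natrD mulrDl mul1r EFinD.
    exact: leeD IH (gapb m).
  apply/seteqP; split => w.
    move=> [j [jm gj]]; rewrite ltnS leq_eqVlt in jm.
    case/orP: jm => [/eqP ej|jm]; [by right; rewrite -ej | by left; exists j].
  case => [[j [jm gj]]|gm]; [exists j; split => //; exact: ltnW | by exists m].
set Ih := [set w | opt_gt (induced_hit_time G C Psi w) m0].
have mIh : measurable Ih by exact: mihit.
apply: (@le_trans _ _ (P x (Ih `|` U m0))).
  apply: le_measure; rewrite ?inE.
  + exact: mhit.
  + exact: measurableU.
  + move=> w hw; case: (cover G hmk hw) => h; [by left | by right].
apply: (le_trans (measureU2 (P x) mIh (mU m0))).
apply: (le_trans (leeD (hihit x m0) (PU m0))).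
rewrite -EFinD lee_fin.
set N' := n%:R `^ (- (alpha - eps)).
have N'0 : 0 <= N' by exact: powR_ge0.
set a := eta x; set b := xi x.
have a0' : 0 < a := eta0 x.
have b1 : 1 <= b := xi1h x.
set e := expR (- omega * m0%:R).
set t := c0 * N'.
have t0 : 0 <= t by exact: mulr_ge0.
have h1 : a * e <= a * t by apply: ler_wpM2l; [lra | exact: he].
have h2 : xp * b * (m0%:R * kk) <= xp * b * t.
  by apply: ler_wpM2l; [apply: mulr_ge0; lra | exact: hg].
have p1 : 0 <= t * b by apply: mulr_ge0; lra.
have p2 : 0 <= t * xp * a by apply: mulr_ge0; [apply: mulr_ge0|]; lra.
have E1 : m0%:R * (xp * b * kk) = xp * b * (m0%:R * kk) by ring.
have E2 : c0 * (1 + xp) * (a + b) * N' = t * a + t * b + t * xp * a + t * xp * b.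
  by rewrite /t; ring.
rewrite E1 E2.
have E3 : xp * b * t = t * xp * b by ring.
have E4 : a * t = t * a by ring.
lra.
Qed.
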